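(* Let $n\ge1$, let $P$ be a finite point set in general position and let the edges of $K_P$ be $2$-coloured. Suppose there are mutually avoiding sets $L,R\subset P$ with $|L|=|R|=2n^2$ such that all edges between $L$ and $R$ have the same colour. Then the colouring contains a monochromatic non-crossing copy of $L_{2n}$.
   Context: A point set is in general position if no three points are collinear; $K_P$ is the complete graph on $P$ with straight-segment edges. Two finite point sets $A,B$ are mutually avoiding if $|A|,|B|\ge2$, no line through two points of $A$ intersects the convex hull of $B$ and vice versa. A monochromatic non-crossing copy of a graph $G$ is an injective map $\phi:V(G)\to P$ such that all segments $\phi(x)\phi(y)$, $xy\in E(G)$, have the same colour and no two share a point other than a common endpoint. The ladder $L_{2n}$ consists of paths $u_1\cdots u_n$, $v_1\cdots v_n$ and edges $u_iv_i$, $i\in[n]$. *)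

(* Defs.v *)
From HB Require Import structures.
From mathcomp Require Import all_boot all_order all_algebra.
Set Implicit Arguments. Unset Strict Implicit. Unset Printing Implicit Defensive.
Import Order.TTheory GRing.Theory Num.Theory.
Local Open Scope ring_scope.

Section Geom.
Variable R : realFieldType.
Notation pt := (R * R)%type.

Definition det3 (a b c : pt) : R :=
  (b.1 - a.1) * (c.2 - a.2) - (b.2 - a.2) * (c.1 - a.1).
Definition collinear (a b c : pt) : bool := det3 a b c == 0.

Variable T : finType.
Variable p : T -> pt.

(* the point set P = image of p; distinct labels give distinct points,
   no three distinct points collinear *)
Definition general_position : Prop :=
  injective p /\
  forall x y z : T, x != y -> y != z -> x != z -> ~~ collinear (p x) (p y) (p z).

Definition in_conv (B : {set T}) (z : pt) : Prop :=
  exists w : T -> R,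
    [/\ forall x, 0 <= w x,
        forall x, x \notin B -> w x = 0,
        \sum_x w x = 1,
        z.1 = \sum_x w x * (p x).1 &
        z.2 = \sum_x w x * (p x).2].

Definition avoids (A B : {set T}) : Prop :=
  forall a a', a \in A -> a' \in A -> a != a' ->
    forall z, in_conv B z -> ~~ collinear (p a) (p a') z.

Definition mutually_avoiding (A B : {set T}) : Prop :=
  [/\ (2 <= #|A|)%N, (2 <= #|B|)%N, avoids A B & avoids B A].

Definition on_seg (a b z : pt) : Prop :=
  exists t : R, [/\ 0 <= t, t <= 1 &
    z = (a.1 + t * (b.1 - a.1), a.2 + t * (b.2 - a.2))].

Definition mono_noncrossing_copy (V : finType) (adj : rel V)
  (c : T -> T -> bool) (col : bool) (phi : V -> T) : Prop :=
  [/\ injective phi,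
      forall x y, adj x y -> c (phi x) (phi y) = col &
      forall x y x' y', adj x y -> adj x' y' ->
        ~ ((x = x' /\ y = y') \/ (x = y' /\ y = x')) ->
        forall z, on_seg (p (phi x)) (p (phi y)) z ->
                  on_seg (p (phi x')) (p (phi y')) z ->
        exists v, [/\ v = x \/ v = y, v = x' \/ v = y' & z = p (phi v)]].
End Geom.

(* Ladder L_{2n}: u_i = inl i, v_i = inr i (i : 'I_n) *)
Definition ladder_adj (n : nat) : rel ('I_n + 'I_n)%type :=
  fun a b => match a, b with
  | inl i, inl j => (i.+1 == j :> nat) || (j.+1 == i :> nat)
  | inr i, inr j => (i.+1 == j :> nat) || (j.+1 == i :> nat)
  | inl i, inr j => i == j
  | inr i, inl j => i == j
  end.

(* Main.v *)
Require Import Defs.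
From HB Require Import structures.
From mathcomp Require Import all_boot all_order all_algebra.
From mathcomp Require Import ring lra zify.
From Stdlib Require Import ClassicalEpsilon Classical.
Import Order.TTheory GRing.Theory Num.Theory.
Set Implicit Arguments. Unset Strict Implicit. Unset Printing Implicit Defensive.


Lemma exmax (P : nat -> Prop) N : P 0 -> (forall k, P k -> k <= N) ->
  exists k, P k /\ forall k', P k' -> k' <= k.
Proof.
move=> P0 hb; apply: NNPP => hn.
have step : forall k, P k -> exists k', P k' /\ k < k'.
  move=> k Pk; apply: NNPP => h; apply: hn; exists k; split => // k' Pk'.
  case: (leqP k' k) => // lt; exfalso; apply: h; by exists k'.
have : forall m, exists k, P k /\ m <= k.
  elim=> [|m [k [Pk mk]]]; first by exists 0.
  have [k' [Pk' kk']] := step k Pk; exists k'; split => //; lia.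
move=> /(_ N.+1) [k [Pk hk]]; have := hb k Pk; lia.
Qed.

Section Ramsey.
Variable T : finType.
Variable A : {set T}.
Variable prec : rel T.
Hypothesis prec_in : forall x y, prec x y -> (x \in A) && (y \in A).
Hypothesis ptrans : transitive prec.
Hypothesis pirr : irreflexive prec.
Hypothesis ptot : forall x y, x \in A -> y \in A -> x != y -> prec x y || prec y x.
Variable c : T -> T -> bool.
Hypothesis csym : forall x y, c x y = c y x.
Variable col : bool.

Definition red x y := prec x y && (c x y == col).

Definition Pch k x := exists s, [/\ size s = k, all (mem A) (rcons s x) & sorted red (rcons s x)].

Lemma chain_bound s : all (mem A) s -> sorted red s -> size s <= #|A|.
Proof.
move=> hA hs.
have hu : uniq s.
  apply: (sorted_uniq ptrans pirr); apply: sub_sorted hs => x y /andP [] //.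
rewrite cardE; apply: uniq_leq_size => // x xs.
by rewrite mem_enum; move/allP: hA => /(_ x xs).
Qed.

Lemma Pch_bound k x : Pch k x -> k <= #|A|.
Proof.
case=> s [<- hA hs]; have := chain_bound hA hs; rewrite size_rcons; lia.
Qed.

Lemma Pch0 x : x \in A -> Pch 0 x.
Proof. by move=> xA; exists [::]; rewrite /= xA. Qed.

Definition lab x := epsilon (inhabits 0) (fun k => Pch k x /\ forall k', Pch k' x -> k' <= k).

Lemma labP x : x \in A -> Pch (lab x) x /\ forall k', Pch k' x -> k' <= lab x.
Proof.
move=> xA; rewrite /lab.
exact: (epsilon_spec (inhabits 0) (fun k => Pch k x /\ forall k', Pch k' x -> k' <= k)
  (@exmax (fun k => Pch k x) #|A| (Pch0 xA) (fun k => @Pch_bound k x))).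
Qed.

Lemma lab_red x y : x \in A -> y \in A -> red x y -> lab x < lab y.
Proof.
move=> xA yA rxy; have [[s [hs hA hsrt]] _] := labP xA.
have [_ hmax] := labP yA; apply: hmax; exists (rcons s x); split.
- by rewrite size_rcons hs.
- by rewrite all_rcons /= yA.
- move: hsrt; case: s {hs hA} => [|h t] /=; first by rewrite rxy.
  by move=> ht; rewrite (rcons_path _ _ (rcons t x)) ht /= last_rcons.
Qed.

Lemma class_bound (M N : nat) :
  (forall k, k < N -> #|[set x in A | lab x == k]| <= M) ->
  #|[set x in A | lab x < N]| <= N * M.
Proof.
elim: N => [|N IH] h.
  by rewrite leqn0 cards_eq0; apply/eqP/setP => x; rewrite !inE ltn0 andbF.
have -> : [set x in A | lab x < N.+1] = [set x in A | lab x < N] :|: [set x in A | lab x == N].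
  by apply/setP => x; rewrite !inE ltnS leq_eqVlt -andb_orr orbC.
apply: (leq_trans (leq_card_setU _ _)).
rewrite mulSn [M + _]addnC leq_add //; first by apply: IH => k kN; apply: h; lia.
by apply: h.
Qed.

Lemma ramsey n : 1 <= n -> 2 * n ^ 2 <= #|A| ->
  (exists s, [/\ size s = n, all (mem A) s & sorted red s]) \/
  (exists K, [/\ size K = 2 * n, uniq K, all (mem A) K &
      forall x y, x \in K -> y \in K -> x != y -> c x y = ~~ col]).
Proof.
move=> n1 hA.
case: (boolP [exists x in A, n.-1 <= lab x]).
  case/existsP => x /andP [xA hx]; left.
  have [[s [hs hAll hsrt]] _] := labP xA.
  exists (drop (size (rcons s x) - n) (rcons s x)); split.
  - rewrite size_drop size_rcons hs; lia.
  - by apply/allP => y /mem_drop; move/allP: hAll; apply.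
  - exact: drop_sorted.
rewrite negb_exists => /forallP hall.
have hlt : forall x, x \in A -> lab x < n.-1.
  by move=> x xA; have := hall x; rewrite xA /= -ltnNge.
case: (boolP [exists k : 'I_n.-1, 2 * n <= #|[set x in A | lab x == k]|]).
  case/existsP => k hk; right.
  set C := [set x in A | lab x == k] in hk.
  exists (take (2 * n) (enum C)); split.
  - by rewrite size_take -cardE; move: hk; case: ltngtP => //; lia.
  - exact/take_uniq/enum_uniq.
  - by apply/allP => x /mem_take; rewrite mem_enum !inE => /andP [].
  - move=> x y /mem_take + /mem_take; rewrite !mem_enum !inE.
    move=> /andP [xA /eqP lx] /andP [yA /eqP ly] xy.
    have nr : forall u v, u \in A -> v \in A -> lab u = lab v -> ~~ red u v.
      by move=> u v uA vA e; apply/negP => /(lab_red uA vA); rewrite e ltnn.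
    have e : lab x = lab y by rewrite lx ly.
    case/orP: (ptot xA yA xy) => hp.
    + have := nr x y xA yA e; rewrite /red hp /=.
      by case: (c x y); case: col.
    + have := nr y x yA xA (esym e); rewrite /red hp /= csym.
      by case: (c x y); case: col.
rewrite negb_exists => /forallP hk.
have hb : #|[set x in A | lab x < n.-1]| <= n.-1 * (2 * n).-1.
  apply: class_bound => k kn; have := hk (Ordinal kn); rewrite -ltnNge /=; lia.
have eA : [set x in A | lab x < n.-1] = A.
  by apply/setP => x; rewrite inE; case xA: (x \in A) => //=; rewrite hlt.
rewrite eA in hb.
exfalso; move: hb hA; nia.
Qed.
End Ramsey.


Local Open Scope ring_scope.


Section G.
Variable R : realFieldType.
Implicit Types a b c u v x y z : (R * R)%type.

Lemma det3_cyc a b c : det3 a b c = det3 b c a.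
Proof. rewrite /det3; ring. Qed.
Lemma det3_swap a b c : det3 a c b = - det3 a b c.
Proof. rewrite /det3; ring. Qed.
Lemma det3_aab a c : det3 a a c = 0.
Proof. rewrite /det3; ring. Qed.
Lemma det3_aba a b : det3 a b a = 0.
Proof. rewrite /det3; ring. Qed.
Lemma det3_abb a b : det3 a b b = 0.
Proof. rewrite /det3; ring. Qed.

Lemma seg_det x y z : on_seg x y z ->
  exists t : R, [/\ 0 <= t, t <= 1 & forall u v, det3 u v z = (1 - t) * det3 u v x + t * det3 u v y].
Proof.
case=> t [t0 t1 ->]; exists t; split => // u v.
rewrite /det3 /=; ring.
Qed.

Lemma seg_sym x y z : on_seg x y z -> on_seg y x z.
Proof.
case=> t [t0 t1 ->]; exists (1 - t); split; first lra; first lra.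
congr pair; ring.
Qed.

Lemma seg_line x y z : on_seg x y z -> det3 x y z = 0.
Proof.
move=> /seg_det [t [_ _ ->]]; rewrite det3_aba det3_abb; ring.
Qed.

Lemma seg_sep u v x y z : 0 < det3 u v x * det3 u v y ->
  on_seg u v z -> on_seg x y z -> False.
Proof.
move=> hp /seg_line h0 /seg_det [t [t0 t1 /(_ u v)]]; rewrite h0 => e.
have : (det3 u v x < 0 /\ det3 u v y < 0) \/ (0 < det3 u v x /\ 0 < det3 u v y).
  case: (ltrgtP (det3 u v x) 0) => hx.
  - left; split => //. nra.
  - right; split => //. nra.
  - move: hp; rewrite hx mul0r ltxx //.
case=> [[hx hy]|[hx hy]]; nra.
Qed.

Lemma seg_adj a b c z : det3 a b c != 0 -> on_seg a b z -> on_seg a c z -> z = a.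
Proof.
move=> hn hb hc.
have h0 := seg_line hb.
case: hc => s [s0 s1 ez].
have : det3 a b z = s * det3 a b c by rewrite ez /det3 /=; ring.
rewrite h0 => /esym/eqP; rewrite mulf_eq0 (negbTE hn) orbF => /eqP s00.
by rewrite ez s00 !mul0r !addr0; case: a {hn hb h0 ez}.
Qed.

End G.


Section P.
Variable R : realFieldType.
Variable T : finType.
Variable p : T -> (R * R)%type.

Lemma gp_det : general_position p -> forall x y z, x != y -> y != z -> x != z ->
  det3 (p x) (p y) (p z) != 0.
Proof. by case=> _ h x y z xy yz xz; have := h x y z xy yz xz. Qed.

Lemma sum2 (x y : T) (l : R) (f : T -> R) : x != y ->
  \sum_t (if t == x then l else if t == y then 1 - l else 0) * f t = l * f x + (1 - l) * f y.
Proof.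
move=> xy; rewrite (bigD1 x) //= eqxx (bigD1 y) //= 1?eq_sym // (negbTE xy) eqxx.
rewrite big1 ?addr0 // => t /andP [ty tx]; by rewrite (negbTE tx) (negbTE ty) mul0r.
Qed.

Lemma sum1 (y : T) (f : T -> R) :
  \sum_t (if t == y then 1 else 0) * f t = f y.
Proof.
rewrite (bigD1 y) //= eqxx mul1r big1 ?addr0 // => t ty; by rewrite (negbTE ty) mul0r.
Qed.

Lemma in_conv1 (B : {set T}) y : y \in B -> in_conv p B (p y).
Proof.
move=> yB; exists (fun t => if t == y then 1 else 0); split.
- by move=> t; case: eqP.
- by move=> t tB; case: eqP => // e; rewrite e yB in tB.
- rewrite (eq_bigr (fun t => (if t == y then 1 else 0) * 1)); last by move=> t _; rewrite mulr1.
  exact: (sum1 y (fun _ => 1)).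
- by rewrite sum1.
- by rewrite sum1.
Qed.

Lemma in_conv2 (B : {set T}) x y l : x \in B -> y \in B -> x != y -> 0 <= l -> l <= 1 ->
  in_conv p B (l * (p x).1 + (1 - l) * (p y).1, l * (p x).2 + (1 - l) * (p y).2).
Proof.
move=> xB yB xy l0 l1.
exists (fun t => if t == x then l else if t == y then 1 - l else 0); split.
- move=> t; case: eqP => // _; case: eqP => // _; lra.
- by move=> t tB; case: eqP => [e|_]; [rewrite e xB in tB|case: eqP => // e; rewrite e yB in tB].
- rewrite (eq_bigr (fun t => (if t == x then l else if t == y then 1 - l else 0) * 1)); last by move=> t _; rewrite mulr1.
  rewrite (sum2 l (fun _ => 1) xy); ring.
- by rewrite sum2.
- by rewrite sum2.
Qed.

Lemma avoid_nz A B a a' y : avoids p A B -> a \in A -> a' \in A -> a != a' -> y \in B ->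
  det3 (p a) (p a') (p y) != 0.
Proof. by move=> av aA a'A aa yB; have := av a a' aA a'A aa _ (in_conv1 yB). Qed.

Lemma avoid_same A B a a' x y : avoids p A B -> a \in A -> a' \in A -> a != a' ->
  x \in B -> y \in B -> 0 < det3 (p a) (p a') (p x) * det3 (p a) (p a') (p y).
Proof.
move=> av aA a'A aa xB yB.
have nx := avoid_nz av aA a'A aa xB; have ny := avoid_nz av aA a'A aa yB.
case: (eqVneq x y) => [<-|xy].
  by rewrite -expr2 exprn_even_gt0 //.
set Dx := det3 _ _ (p x) in nx *; set Dy := det3 _ _ (p y) in ny *.
rewrite ltNge; apply/negP => hle.
have hlt : Dx * Dy < 0 by rewrite lt_neqAle hle mulf_neq0.
have hd : Dy - Dx != 0.
  apply/eqP => e; have : Dy = Dx by apply/eqP; rewrite -subr_eq0 e.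
  move=> ee; move: hlt; rewrite ee; nra.
set l := Dy / (Dy - Dx).
have l0 : 0 <= l /\ l <= 1.
  have hq : (Dy - Dx) * (Dy - Dx)^-1 = 1 by rewrite mulfV.
  rewrite /l; set q := (Dy - Dx)^-1 in hq *.
  case: (ltrgtP Dx 0) => hx.
  - have hy : 0 < Dy by nra.
    have q0 : 0 < q by rewrite /q invr_gt0; lra.
    split; nra.
  - have hy : Dy < 0 by nra.
    have q0 : q < 0 by rewrite /q invr_lt0; lra.
    split; nra.
  - by move: nx; rewrite hx eqxx.
case: l0 => l0 l1.
have := av a a' aA a'A aa _ (in_conv2 xB yB xy l0 l1).
apply/negP/negPn; rewrite /collinear.
have -> : det3 (p a) (p a') (l * (p x).1 + (1 - l) * (p y).1, l * (p x).2 + (1 - l) * (p y).2)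
  = l * Dx + (1 - l) * Dy by rewrite /Dx /Dy /det3 /=; ring.
rewrite /l; apply/eqP; field.
done.
Qed.
End P.


Section G.
Variable R : realFieldType.
Implicit Types a b c u v x y z : (R * R)%type.

Lemma trans_ident a b x y z :
  det3 b x y * det3 b a z + det3 b y z * det3 b a x + det3 b z x * det3 b a y = 0.
Proof. rewrite /det3; ring. Qed.

Lemma trans_core a b x y z (e d : R) : (e = 1 \/ e = -1) -> (d = 1 \/ d = -1) ->
  0 < e * det3 a b x -> 0 < e * det3 a b y -> 0 < e * det3 a b z ->
  0 < d * det3 b x y -> 0 < d * det3 b y z -> 0 < d * det3 b x z.
Proof.
move=> he hd.
have ex : det3 a b x = - det3 b a x by rewrite det3_cyc det3_swap.
have ey : det3 a b y = - det3 b a y by rewrite det3_cyc det3_swap.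
have ez : det3 a b z = - det3 b a z by rewrite det3_cyc det3_swap.
have exz : det3 b x z = - det3 b z x by rewrite det3_swap.
rewrite ex ey ez exz.
have := trans_ident a b x y z.
move: (det3 b x y) (det3 b a z) (det3 b y z) (det3 b a x) (det3 b z x) (det3 b a y).
move=> P Q U V W Z hid.
case: he => ->; case: hd => -> h1 h2 h3 h4 h5; nra.
Qed.
End G.

Section H.
Variable R : realFieldType.
Lemma conv_pos (Y Z s : R) : 0 <= s -> s <= 1 -> 0 < Y -> 0 < Z -> 0 < (1 - s) * Y + s * Z.
Proof.
move=> s0 s1 hY hZ; case: (ltrgtP s 0) => hs.
- lra.
- have h1 : 0 <= (1 - s) * Y by apply: mulr_ge0; lra.
  have h2 : 0 < s * Z by apply: mulr_gt0.
  lra.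
- by rewrite hs subr0 mul1r mul0r addr0.
Qed.
Lemma conv_nneg (Y Z s : R) : 0 <= s -> s <= 1 -> 0 <= Y -> 0 <= Z -> 0 <= (1 - s) * Y + s * Z.
Proof.
move=> s0 s1 hY hZ; apply: addr_ge0; apply: mulr_ge0 => //; lra.
Qed.
Lemma pm1_pos (a b e : R) : (e = 1 \/ e = -1) -> 0 < e * a -> 0 < a * b -> 0 < e * b.
Proof.
case=> ->; rewrite ?mul1r ?mulN1r.
- by move=> ha; rewrite pmulr_rgt0.
- rewrite oppr_gt0 => ha; rewrite oppr_gt0 => hab.
  by move: hab; rewrite nmulr_rgt0 // => hb; rewrite hb.
Qed.
End H.
Section H2.
Variable R : realFieldType.
Lemma prod_pos (P Q e : R) : (e = 1 \/ e = -1) -> 0 < e * P -> 0 < e * Q -> 0 < P * Q.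
Proof.
case=> ->; rewrite ?mul1r ?mulN1r; first by move=> hP hQ; apply: mulr_gt0.
rewrite !oppr_gt0 => hP hQ; by rewrite nmulr_rgt0.
Qed.
End H2.


Section P.
Variable R : realFieldType.
Variable T : finType.
Variable p : T -> (R * R)%type.

Definition pm1 (e : R) := e = 1 \/ e = -1.

Lemma pm1N e : pm1 e -> pm1 (- e).
Proof. by case=> ->; [right|left; rewrite opprK]. Qed.

Lemma sign_split (D e : R) : pm1 e -> D != 0 -> 0 < e * D \/ 0 < e * - D.
Proof.
move=> he nD; case: (ltrgtP D 0) => hD.
- case: he => ->; [right|left]; nra.
- case: he => ->; [left|right]; nra.
- by move: nD; rewrite hD eqxx.
Qed.

Lemma extreme (a b : T) (e : R) (s : seq T) : pm1 e -> s != [::] ->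
  (forall x, x \in s -> 0 < e * det3 (p a) (p b) (p x)) ->
  (forall x y, x \in s -> y \in s -> x != y -> det3 (p b) (p x) (p y) != 0) ->
  exists2 c, c \in s & forall x, x \in s -> x != c -> 0 < e * det3 (p b) (p x) (p c).
Proof.
move=> he; elim: s => [//|y s IH] _ hs hgp.
case: (altP (s =P [::])) => [->|sn].
  by exists y; rewrite ?mem_head // => x; rewrite inE => /eqP ->; rewrite eqxx.
have ms : forall x, x \in s -> x \in y :: s by move=> x xs; rewrite inE xs orbT.
have [c cs hc] := IH sn (fun x xs => hs x (ms x xs))
  (fun x z xs zs => hgp x z (ms x xs) (ms z zs)).
case: (eqVneq y c) => [yc|yc].
  exists c; first by rewrite inE cs orbT.
  by move=> x; rewrite inE => /orP [/eqP ->|xs]; [rewrite yc eqxx|exact: hc].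
have ys : y \in y :: s by rewrite mem_head.
have cs' : c \in y :: s by rewrite inE cs orbT.
case: (sign_split he (hgp _ _ ys cs' yc)) => h.
  exists c => // x; rewrite inE => /orP [/eqP ->|xs] //; exact: hc.
exists y => // x; rewrite inE => /orP [/eqP ->|xs]; first by rewrite eqxx.
move=> xy; case: (eqVneq x c) => [->|xc]; first by rewrite -det3_swap in h.
apply: (@trans_core _ (p a) (p b) (p x) (p c) (p y) e e) => //.
- exact: hs (ms _ xs).
- exact: hs (ms _ cs).
- exact: hs.
- exact: hc.
- by rewrite -det3_swap in h.
Qed.

Lemma other_pt (A : {set T}) x : (2 <= #|A|)%N -> exists2 y, y \in A & y != x.
Proof.
move=> h; have : (0 < #|A :\ x|)%N.
  rewrite (cardsD1 x A) in h; rewrite -(leq_add2l (x \in A)).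
  by apply: leq_trans h; rewrite addn1; case: (x \in A).
by case/card_gt0P => y; rewrite !inE => /andP [yx yA]; exists y.
Qed.



End P.


Section Prec.
Variable R : realFieldType.
Variable T : finType.
Variable p : T -> (R * R)%type.
Hypothesis gp : general_position p.

Lemma ma_disj A B x : mutually_avoiding p A B -> x \in A -> x \in B -> False.
Proof.
case=> hA _ av _ xA xB.
have [y yA yx] := other_pt x hA.
have xy : x != y by rewrite eq_sym.
by have := avoid_nz av xA yA xy xB; rewrite det3_aba eqxx.
Qed.

Lemma gp_adj a b c z : a != b -> b != c -> a != c ->
  on_seg (p a) (p b) z -> on_seg (p a) (p c) z -> z = p a.
Proof. move=> ab bc ac; apply: seg_adj; exact: gp_det. Qed.

Lemma gp_noton x y w : x != y -> y != w -> x != w -> on_seg (p x) (p y) (p w) -> False.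
Proof. move=> xy yw xw /seg_line; apply/eqP; exact: gp_det. Qed.

Variables A B : {set T}.
Hypothesis hMA : mutually_avoiding p A B.
Variable o : T.
Hypothesis oB : o \in B.
Variable e : R.
Hypothesis he : pm1 e.

Definition prec (x y : T) := [&& x \in A, y \in A & 0 < e * det3 (p o) (p x) (p y)].

Lemma avAB : avoids p A B. Proof. by case: hMA. Qed.
Lemma avBA : avoids p B A. Proof. by case: hMA. Qed.

Lemma neqAB x y : x \in A -> y \in B -> x != y.
Proof. by move=> xA yB; apply/eqP => exy; apply: (ma_disj hMA xA); rewrite exy. Qed.

Lemma prec_in x y : prec x y -> (x \in A) && (y \in A).
Proof. by case/and3P => -> ->. Qed.

Lemma prec_irr : irreflexive prec.
Proof. by move=> x; rewrite /prec det3_abb mulr0 ltxx !andbF. Qed.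

Lemma prec_tot x y : x \in A -> y \in A -> x != y -> prec x y || prec y x.
Proof.
move=> xA yA xy; rewrite /prec xA yA /=.
have nz : det3 (p o) (p x) (p y) != 0.
  apply: gp_det => //; first by rewrite eq_sym neqAB.
  by rewrite eq_sym neqAB.
case: (sign_split he nz) => h; first by rewrite h.
by rewrite (det3_swap (p o) (p x) (p y)) h orbT.
Qed.

Lemma prec_trans : transitive prec.
Proof.
move=> y x z /and3P [xA yA hxy] /and3P [_ zA hyz]; rewrite /prec xA zA /=.
case: hMA => _ hB _ _.
have [o2 o2B o2o] := other_pt o hB.
have av := avBA.
have nzx := avoid_nz av o2B oB o2o xA.
have sy := avoid_same av o2B oB o2o xA yA.
have sz := avoid_same av o2B oB o2o xA zA.
move: nzx sy sz; set Dx := det3 _ _ (p x); set Dy := det3 _ _ (p y); set Dz := det3 _ _ (p z).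
move=> nzx sy sz.
have [e0 [he0 h0x]] : exists e0, pm1 e0 /\ 0 < e0 * Dx.
  case: (sign_split he nzx) => h; first by exists e.
  by exists (- e); split; [exact: pm1N|rewrite mulNr -mulrN].
have h0y : 0 < e0 * Dy by exact: pm1_pos he0 h0x sy.
have h0z : 0 < e0 * Dz by exact: pm1_pos he0 h0x sz.
exact: (@trans_core _ (p o2) (p o) (p x) (p y) (p z) e0 e).
Qed.

Lemma prec_any o' x y : o' \in B -> prec x y -> 0 < e * det3 (p o') (p x) (p y).
Proof.
move=> o'B /and3P [xA yA h].
have xy : x != y by apply/eqP => exy; move: h; rewrite exy det3_abb mulr0 ltxx.
have := avoid_same avAB xA yA xy oB o'B.
rewrite -(det3_cyc (p o)) -(det3_cyc (p o')) => hs; exact: pm1_pos he h hs.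
Qed.

Lemma pathA a b c d z : prec a b -> prec b c -> prec b d ->
  on_seg (p a) (p b) z -> on_seg (p c) (p d) z -> False.
Proof.
move=> /and3P [_ _ hab] /and3P [_ _ hbc] /and3P [_ _ hbd].
move=> /seg_det [t [t0 t1 /(_ (p b) (p o)) h1]] /seg_det [s [s0 s1 /(_ (p b) (p o)) h2]].
rewrite h1 det3_aba mulr0 addr0 in h2.
rewrite (det3_cyc (p b) (p o) (p a)) (det3_cyc (p b) (p o) (p c))
  (det3_cyc (p b) (p o) (p d)) (det3_swap (p o) (p b) (p c)) (det3_swap (p o) (p b) (p d)) in h2.
have l : 0 <= (1 - t) * (e * det3 (p o) (p a) (p b)) by apply: mulr_ge0 => //; [lra|exact: ltW].
have r : 0 < (1 - s) * (e * det3 (p o) (p b) (p c)) + s * (e * det3 (p o) (p b) (p d)).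
  exact: conv_pos.
have : e * ((1 - t) * det3 (p o) (p a) (p b)) = e * ((1 - s) * - det3 (p o) (p b) (p c) + s * - det3 (p o) (p b) (p d)) by rewrite h2.
move=> ee; move: l r; rewrite mulrCA ee. 
set P := det3 _ (p b) (p c); set Q := det3 _ (p b) (p d).
have -> : e * ((1 - s) * - P + s * - Q) = - ((1 - s) * (e * P) + s * (e * Q)) by ring.
rewrite oppr_ge0 => l r; have := lt_le_trans r l; by rewrite ltxx.
Qed.

Lemma pathA_rung a b w v z : v \in B ->
  (prec w a && prec w b) || (prec a w && prec b w) ->
  on_seg (p a) (p b) z -> on_seg (p w) (p v) z -> False.
Proof.
move=> vB hw h1 h2; apply: (seg_sep _ h2 h1).
rewrite (det3_cyc (p w) (p v) (p a)) (det3_cyc (p w) (p v) (p b)).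
rewrite (det3_swap (p v) (p w) (p a)) (det3_swap (p v) (p w) (p b)) mulrNN.
case/orP: hw => /andP [h3 h4].
- exact: prod_pos he (prec_any vB h3) (prec_any vB h4).
- have h5 := prec_any vB h3; have h6 := prec_any vB h4.
  rewrite (det3_swap (p v) (p w) (p a)) in h5; rewrite (det3_swap (p v) (p w) (p b)) in h6.
  by have := prod_pos he h5 h6; rewrite mulrNN.
Qed.

Lemma pathA_B a b x y z : a \in A -> b \in A -> a != b -> x \in B -> y \in B ->
  on_seg (p a) (p b) z -> on_seg (p x) (p y) z -> False.
Proof.
move=> aA bA ab xB yB; apply: seg_sep; exact: avoid_same avAB aA bA ab xB yB.
Qed.

End Prec.


Section NC.
Variable R : realFieldType.
Variable T : finType.
Variable p : T -> (R * R)%type.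
Hypothesis gp : general_position p.

Definition Good (x y x' y' : T) := forall z, on_seg (p x) (p y) z -> on_seg (p x') (p y') z ->
  exists v, [/\ v = x \/ v = y, v = x' \/ v = y' & z = p v].

Definition NCE (E : T -> T -> Prop) := forall x y x' y', E x y -> E x' y' ->
  ~ ((x = x' /\ y = y') \/ (x = y' /\ y = x')) -> Good x y x' y'.

Lemma Good_sym x y x' y' : Good x y x' y' -> Good x' y' x y.
Proof. move=> h z h1 h2; have [v [? ? ?]] := h z h2 h1; by exists v. Qed.

Lemma Good_swap x y x' y' : Good x y x' y' -> Good y x x' y'.
Proof.
move=> h z h1 h2; have [v [v1 ? ?]] := h z (seg_sym h1) h2; exists v; split => //.
by case: v1; [right|left].
Qed.

Lemma NCE_sym (E : T -> T -> Prop) : NCE E -> NCE (fun x y => E x y \/ E y x).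
Proof.
move=> h x y x' y' [e1|e1] [e2|e2] ns.
- by apply: h.
- apply: Good_sym; apply: Good_swap; apply: Good_sym; apply: h => //; tauto.
- apply: Good_swap; apply: h => //; tauto.
- apply: Good_swap; apply: Good_sym; apply: Good_swap; apply: Good_sym; apply: h => //; tauto.
Qed.

Lemma transfer n (phi : ('I_n + 'I_n)%type -> T) (c : T -> T -> bool) col (E : T -> T -> Prop) :
  injective phi -> (forall x y, ladder_adj x y -> c (phi x) (phi y) = col) ->
  (forall x y, ladder_adj x y -> E (phi x) (phi y)) -> NCE E ->
  mono_noncrossing_copy p (@ladder_adj n) c col phi.
Proof.
move=> inj hc hE hN; split => // x y x' y' a1 a2 ns z h1 h2.
have ns' : ~ ((phi x = phi x' /\ phi y = phi y') \/ (phi x = phi y' /\ phi y = phi x')).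
  by case=> [[/inj e1 /inj e2]|[/inj e1 /inj e2]]; apply: ns; [left|right].
have [v [v1 v2 ->]] := hN _ _ _ _ (hE _ _ a1) (hE _ _ a2) ns' z h1 h2.
case: v1 => ev.
- exists x; split => //; [by left| |by rewrite ev].
  by case: v2; rewrite ev => /inj ->; [left|right].
- exists y; split => //; [by right| |by rewrite ev].
  by case: v2; rewrite ev => /inj ->; [left|right].
Qed.

Fixpoint sq (s : seq T) : seq (T * T) :=
  if s is a :: s' then [seq (a, y) | y <- take 2 s'] ++ sq s' else [::].

Lemma sq_mem s x y : (x, y) \in sq s -> [/\ x \in s, y \in s & (uniq s -> x != y)].
Proof.
elim: s => [//|a s IH] /=; rewrite mem_cat => /orP [/mapP [w wt [-> ->]]|/IH [h1 h2 h3]].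
- have ws := mem_take wt; rewrite mem_head inE ws orbT; split => // /andP [an _].
  by apply/eqP => e; rewrite e ws in an.
- rewrite !inE h1 h2 !orbT; split => // /andP [_]; exact: h3.
Qed.

Lemma sq_nth1 s x0 k : (k.+1 < size s)%N -> (nth x0 s k, nth x0 s k.+1) \in sq s.
Proof.
elim: s k => [//|a s IH] [|k] /= hk; rewrite mem_cat.
- case: s {IH} hk => [//|b s] _ /=; by rewrite mem_head.
- by rewrite IH ?orbT.
Qed.

Lemma sq_nth2 s x0 k : (k.+2 < size s)%N -> (nth x0 s k, nth x0 s k.+2) \in sq s.
Proof.
elim: s k => [//|a s IH] [|k] /= hk; rewrite mem_cat.
- case: s {IH} hk => [//|b [//|c s]] _ /=; by rewrite !inE eqxx orbT.
- by rewrite IH ?orbT.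
Qed.

Lemma new_old (a b c w x y : T) (f : R) : (w = b \/ w = c) ->
  0 <= f * det3 (p b) (p c) (p x) -> 0 <= f * det3 (p b) (p c) (p y) ->
  f * det3 (p b) (p c) (p a) < 0 -> x != y -> Good a w x y.
Proof.
move=> hw hx hy ha xy z h1 h2.
have h2' := h2.
case: h1 => t [t0 t1 ez].
case: h2 => s [s0 s1 ez2].
have hDw : det3 (p b) (p c) (p w) = 0 by case: hw => ->; rewrite ?det3_aba ?det3_abb.
have e1 : det3 (p b) (p c) z = (1 - t) * det3 (p b) (p c) (p a) + t * det3 (p b) (p c) (p w).
  by rewrite ez /det3 /=; ring.
have e2 : det3 (p b) (p c) z = (1 - s) * det3 (p b) (p c) (p x) + s * det3 (p b) (p c) (p y).
  by rewrite ez2 /det3 /=; ring.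
rewrite hDw mulr0 addr0 in e1.
have hge : 0 <= f * det3 (p b) (p c) z.
  rewrite e2 mulrDr [f * ((1 - s) * _)]mulrCA [f * (s * _)]mulrCA; exact: conv_nneg.
rewrite e1 mulrCA in hge.
have t1' : t = 1.
  have : 1 - t <= 0.
    rewrite leNgt; apply/negP => hpos.
    have : (1 - t) * (f * det3 (p b) (p c) (p a)) < 0 by rewrite pmulr_rlt0.
    by rewrite ltNge hge.
  by rewrite subr_le0 => h; apply/eqP; rewrite eq_le t1 h.
have ezw : z = p w.
  rewrite ez t1'; move: (p a) (p w) => [a1 a2] [w1 w2] /=; congr pair; ring.
rewrite ezw in h2'.
case: (eqVneq w x) => [wx|wx]; first by exists w; split; [right|left|].
case: (eqVneq w y) => [wy|wy]; first by exists w; split; [right|right|].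
exfalso; apply: (gp_noton gp xy _ _ h2'); by rewrite eq_sym.
Qed.

Lemma NCE_eq (s1 s2 : seq (T * T)) : s1 = s2 ->
  NCE (fun x y => (x, y) \in s2) -> NCE (fun x y => (x, y) \in s1).
Proof. by move=> ->. Qed.

Lemma spiral m : forall (a b : T) (S : seq T) e, size S = m -> uniq [:: a, b & S] -> pm1 e ->
  (forall x, x \in S -> 0 < e * det3 (p a) (p b) (p x)) ->
  exists rest, perm_eq rest S /\ NCE (fun x y => (x, y) \in sq [:: a, b & rest]).
Proof.
elim: m => [|m IH] a b S e hS hu he hpos.
  move/size0nil: hS => ->; exists [::]; split => //.
  move=> x y x' y'; rewrite /= !inE => /eqP [-> ->] /eqP [-> ->] ns; exfalso; apply: ns; by left.
have Sn : S != [::] by apply/eqP => e0; rewrite e0 in hS.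
move: hu; rewrite /= !inE negb_or => /and3P [/andP [ab aS] bS uS].
have gen : forall x y, x \in S -> y \in S -> x != y -> det3 (p b) (p x) (p y) != 0.
  move=> x y xS yS xy; apply: gp_det => //.
  - by apply/eqP => ebx; rewrite ebx xS in bS.
  - by apply/eqP => eby; rewrite eby yS in bS.
have [c cS hc] := extreme he Sn hpos gen.
have bc : b != c by apply/eqP => ebc; rewrite ebc cS in bS.
have ac : a != c by apply/eqP => eac; rewrite eac cS in aS.
set S' := rem c S.
have hS' : size S' = m by rewrite size_rem // hS.
have uS' : uniq S' by rewrite rem_uniq.
have cS' : c \notin S' by rewrite (mem_rem_uniq _ uS) inE eqxx.
have bS' : b \notin S' by apply/negP => /mem_rem; apply/negP.
have hu' : uniq [:: b, c & S'] by rewrite /= !inE negb_or bc bS' cS' uS'.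
have hpos' : forall x, x \in S' -> 0 < - e * det3 (p b) (p c) (p x).
  move=> x; rewrite (mem_rem_uniq _ uS) inE => /andP [xc xS].
  by rewrite (det3_swap (p b) (p x) (p c)) mulrNN; apply: hc.
have [rest [prest hN]] := IH b c S' (- e) hS' hu' (pm1N he) hpos'.
exists (c :: rest); split.
  rewrite perm_sym; apply: (perm_trans (perm_to_rem cS)); by rewrite perm_cons perm_sym.
have pbc : perm_eq [:: b, c & rest] [:: b, c & S'] by rewrite !perm_cons.
have ur : uniq [:: b, c & rest] by rewrite (perm_uniq pbc).
have qpos : forall q, q \in [:: b, c & rest] -> 0 <= - e * det3 (p b) (p c) (p q).
  move=> q; rewrite !inE => /orP [/eqP ->|/orP [/eqP ->|qr]].
  - by rewrite det3_aba mulr0.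
  - by rewrite det3_abb mulr0.
  - by apply: ltW; apply: hpos'; rewrite -(perm_mem prest).
have aneg : - e * det3 (p b) (p c) (p a) < 0.
  by rewrite -det3_cyc mulNr oppr_lt0; apply: hpos.
have NO : forall w x y, (w = b \/ w = c) -> (x, y) \in sq [:: b, c & rest] -> Good a w x y.
  move=> w x y hw /sq_mem [xi yi /(_ ur) xy].
  exact: (new_old hw (qpos x xi) (qpos y yi) aneg xy).
have esq : sq [:: a, b, c & rest] = (a, b) :: (a, c) :: sq [:: b, c & rest] by rewrite /= take0.
apply: (NCE_eq esq).
move=> x y x' y'; rewrite !inE.
move=> /orP [/eqP [-> ->]|/orP [/eqP [-> ->]|o1]] /orP [/eqP [-> ->]|/orP [/eqP [-> ->]|o2]] ns.
- by exfalso; apply: ns; left.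
- move=> z h1 h2; exists a; split; [by left|by left|exact: gp_adj ab bc ac h1 h2].
- by apply: NO o2; left.
- move=> z h1 h2; exists a; split; [by left|by left|].
  have cb : c != b by rewrite eq_sym.
  exact: gp_adj ac cb ab h1 h2.
- by exfalso; apply: ns; left.
- by apply: NO o2; right.
- by apply: Good_sym; apply: NO o1; left.
- by apply: Good_sym; apply: NO o1; right.
- exact: hN.
Qed.

End NC.


Definition lidx n (v : ('I_n + 'I_n)%type) : nat :=
  match v with inl i => (2 * i)%N | inr i => (2 * i).+1 end.

Lemma lidx_inj n : injective (@lidx n).
Proof.
move=> [i|i] [j|j] /= h.
- congr inl; apply: ord_inj; lia.
- lia.
- lia.
- by congr inr; apply: ord_inj; lia.
Qed.

Lemma lidx_lt n v : (@lidx n v < 2 * n)%N.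
Proof. by case: v => i /=; have := ltn_ord i; lia. Qed.

Section Blue.
Variable R : realFieldType.
Variable T : finType.
Variable p : T -> (R * R)%type.
Hypothesis gp : general_position p.

Lemma ladder_from_seq n (s : seq T) (x0 : T) (c : T -> T -> bool) col :
  size s = (2 * n)%N -> uniq s -> NCE p (fun x y => (x, y) \in sq s) ->
  (forall x y, x \in s -> y \in s -> x != y -> c x y = col) ->
  exists phi, mono_noncrossing_copy p (@ladder_adj n) c col phi.
Proof.
move=> hs us hN hc.
pose phi v := nth x0 s (@lidx n v).
have inj : injective phi.
  move=> v w /eqP; rewrite /phi nth_uniq ?hs ?lidx_lt // => /eqP; exact: lidx_inj.
have adj_neq : forall v w : ('I_n + 'I_n)%type, @ladder_adj n v w -> v != w.
  move=> [i|i] [j|j] //= h.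
  - apply/eqP => -[e]; move: h; rewrite e; lia.
  - apply/eqP => -[e]; move: h; rewrite e; lia.
exists phi; apply: (transfer (E := fun x y => (x, y) \in sq s \/ (y, x) \in sq s)) => //.
- move=> v w a; apply: hc; rewrite ?mem_nth ?hs ?lidx_lt //.
  by apply: contra (adj_neq _ _ a) => /eqP /inj ->.
- have n2 : forall k, (k.+2 < 2 * n)%N -> (nth x0 s k, nth x0 s k.+2) \in sq s.
    by move=> k hk; apply: sq_nth2; rewrite hs.
  have n1 : forall k, (k.+1 < 2 * n)%N -> (nth x0 s k, nth x0 s k.+1) \in sq s.
    by move=> k hk; apply: sq_nth1; rewrite hs.
  move=> [i|i] [j|j] /=; rewrite /phi /=; have := ltn_ord i; have := ltn_ord j.
  + move=> hj hi; case/orP => /eqP h.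
    * left; have -> : (2 * j = (2 * i).+2)%N by lia. apply: n2; lia.
    * right; have -> : (2 * i = (2 * j).+2)%N by lia. apply: n2; lia.
  + move=> hj hi /eqP h; left; rewrite h; apply: n1; lia.
  + move=> hj hi /eqP h; right; rewrite h; apply: n1; lia.
  + move=> hj hi; case/orP => /eqP h.
    * left; have -> : ((2 * j).+1 = (2 * i).+3)%N by lia. apply: n2; lia.
    * right; have -> : ((2 * i).+1 = (2 * j).+3)%N by lia. apply: n2; lia.
- exact: NCE_sym.
Qed.
End Blue.

Section BlueL.
Variable R : realFieldType.
Variable T : finType.
Variable p : T -> (R * R)%type.
Hypothesis gp : general_position p.
Variables A B : {set T}.
Hypothesis hMA : mutually_avoiding p A B.

Lemma perm_rem2 (K : seq T) a b rest : a \in K -> b \in rem a K ->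
  perm_eq rest (rem b (rem a K)) -> perm_eq [:: a, b & rest] K.
Proof.
move=> aK bK pr.
rewrite perm_sym; apply: (perm_trans (perm_to_rem aK)); rewrite perm_cons perm_sym.
rewrite perm_sym; apply: (perm_trans (perm_to_rem bK)); by rewrite perm_cons perm_sym.
Qed.

Lemma blue_ladder n (K : seq T) (c : T -> T -> bool) col : (1 <= n)%N ->
  size K = (2 * n)%N -> uniq K -> all (mem A) K ->
  (forall x y, x \in K -> y \in K -> x != y -> c x y = col) ->
  exists phi, mono_noncrossing_copy p (@ladder_adj n) c col phi.
Proof.
move=> n1 hK uK aK hc.
have hKA : forall x, x \in K -> x \in A by move=> x xK; move/allP: aK => /(_ x xK).
have [_ hB _ _] := hMA.
have [o oB] : exists o, o \in B.
  have : (0 < #|B|)%N by lia.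
  by case/card_gt0P => o; exists o.
have [o2 o2B o2o] := other_pt o hB.
have oK : forall x, x \in K -> o != x by move=> x xK; rewrite eq_sym (neqAB hMA) ?hKA.
case: K hK uK aK hc hKA oK => [|k0 K'] hK uK aK hc hKA oK; first by move: hK => /=; lia.
set K := k0 :: K' in hK uK aK hc hKA oK *.
have k0K : k0 \in K by rewrite mem_head.
have av := avBA hMA.
have nz0 := avoid_nz av o2B oB o2o (hKA _ k0K).
have [e0 [he0 h0]] : exists e0, pm1 e0 /\ 0 < e0 * det3 (p o2) (p o) (p k0).
  case: (sign_split (e := 1) (or_introl erefl) nz0) => h; first by exists 1; split => //; left.
  by exists (-1); split; [right|rewrite mulN1r; rewrite mul1r in h].
have hpos : forall x, x \in K -> 0 < e0 * det3 (p o2) (p o) (p x).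
  move=> x xK; exact: pm1_pos he0 h0 (avoid_same av o2B oB o2o (hKA _ k0K) (hKA _ xK)).
have gen : forall x y, x \in K -> y \in K -> x != y -> det3 (p o) (p x) (p y) != 0.
  by move=> x y xK yK xy; apply: gp_det => //; apply: oK.
have [a1 a1K ha1] := extreme he0 (isT : K != [::]) hpos gen.
set K1 := rem a1 K.
have mK1 : forall x, x \in K1 = (x != a1) && (x \in K).
  by move=> x; rewrite (mem_rem_uniq _ uK) inE.
have hpos1 : forall x, x \in K1 -> 0 < - e0 * det3 (p o) (p a1) (p x).
  move=> x; rewrite mK1 => /andP [xa xK].
  by rewrite (det3_swap (p o) (p x) (p a1)) mulrNN; apply: ha1.
have K1n : K1 != [::].
  apply/eqP => e; have := size_rem a1K; rewrite -/K1 e hK /=; lia.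
have gen1 : forall x y, x \in K1 -> y \in K1 -> x != y -> det3 (p a1) (p x) (p y) != 0.
  move=> x y; rewrite !mK1 => /andP [xa xK] /andP [ya yK] xy.
  by apply: gp_det => //; rewrite eq_sym.
have [b1 b1K1 hb1] := extreme (pm1N he0) K1n hpos1 gen1.
set S := rem b1 K1.
have uK1 : uniq K1 by rewrite rem_uniq.
have mS : forall x, x \in S = (x != b1) && (x \in K1).
  by move=> x; rewrite (mem_rem_uniq _ uK1) inE.
have hposS : forall x, x \in S -> 0 < e0 * det3 (p a1) (p b1) (p x).
  move=> x; rewrite mS => /andP [xb xK1].
  by have := hb1 x xK1 xb; rewrite (det3_swap (p a1) (p b1) (p x)) mulrNN.
have uS : uniq [:: a1, b1 & S].
  have b1a1 : b1 != a1 by move: b1K1; rewrite mK1 => /andP [].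
  have a1S : a1 \notin S by rewrite mS mK1 eqxx andbF.
  have b1S : b1 \notin S by rewrite mS eqxx.
  by rewrite /= inE negb_or a1S b1S rem_uniq // eq_sym b1a1.
have [rest [prest hN]] := spiral gp (erefl (size S)) uS he0 hposS.
have pK : perm_eq [:: a1, b1 & rest] K by apply: perm_rem2.
apply: (ladder_from_seq (n := n) (s := [:: a1, b1 & rest]) a1).
- by rewrite (perm_size pK).
- by rewrite (perm_uniq pK).
- exact: hN.
- by move=> x y; rewrite !(perm_mem pK); apply: hc.
Qed.
End BlueL.


Section Side.
Variable R : realFieldType.
Variable T : finType.
Variable p : T -> (R * R)%type.
Hypothesis gp : general_position p.
Variables A B : {set T}.
Hypothesis hMA : mutually_avoiding p A B.
Variable o : T.
Hypothesis oB : o \in B.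
Variable e : R.
Hypothesis he : pm1 e.
Variable n : nat.
Variable s : seq T.
Variable x0 : T.
Hypothesis hs : size s = n.
Hypothesis hsort : sorted (prec p A o e) s.
Hypothesis hall : all (mem A) s.

Local Notation PR := (prec p A o e).

Lemma nth_prec i j : (i < j)%N -> (j < n)%N -> PR (nth x0 s i) (nth x0 s j).
Proof.
move=> ij jn; apply: (sorted_ltn_nth (prec_trans hMA oB he)) => //; rewrite inE hs //.
exact: ltn_trans ij jn.
Qed.

Lemma nth_A i : (i < n)%N -> (nth x0 s i) \in A.
Proof. by move=> hi; move/allP: hall; apply; rewrite mem_nth // hs. Qed.

Lemma nth_neq i j : (i < n)%N -> (j < n)%N -> i != j -> (nth x0 s i) != (nth x0 s j).
Proof.
move=> hi hj ij; case: (ltngtP i j) => [lt|lt|eq]; last by rewrite eq eqxx in ij.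
- by apply/eqP => E; have := nth_prec lt hj; rewrite E prec_irr.
- by apply/eqP => E; have := nth_prec lt hi; rewrite E prec_irr.
Qed.

Lemma UU_lt i j : (i < j)%N -> (j.+1 < n)%N -> Good p (nth x0 s i) (nth x0 s i.+1) (nth x0 s j) (nth x0 s j.+1).
Proof.
move=> ij hj z h1 h2.
case: (eqVneq j i.+1) => [ej|nej].
  subst j; exists (nth x0 s i.+1); split; [by right|by left|].
  apply: (gp_adj gp _ _ _ (seg_sym h1) h2); apply: nth_neq; lia.
exfalso; apply: (pathA (o := o) (e := e) (A := A) _ _ _ h1 h2); apply: nth_prec; lia.
Qed.

Lemma UU_gen i j : (i.+1 < n)%N -> (j.+1 < n)%N -> i != j -> Good p (nth x0 s i) (nth x0 s i.+1) (nth x0 s j) (nth x0 s j.+1).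
Proof.
move=> hi hj ij; case: (ltngtP i j) => [lt|lt|eq]; last by rewrite eq eqxx in ij.
- exact: UU_lt.
- exact/Good_sym/UU_lt.
Qed.

Lemma UW_gen i j v : (i.+1 < n)%N -> (j < n)%N -> v \in B -> Good p (nth x0 s i) (nth x0 s i.+1) (nth x0 s j) v.
Proof.
move=> hi hj vB z h1 h2.
have nv : forall k, (k < n)%N -> (nth x0 s k) != v by move=> k hk; apply: (neqAB hMA) => //; exact: nth_A.
case: (eqVneq j i) => [ej|nej].
  subst j; exists (nth x0 s i); split; [by left|by left|].
  apply: (gp_adj gp _ _ _ h1 h2); [apply: nth_neq; lia|rewrite nv //; lia|rewrite nv //; lia].
case: (eqVneq j i.+1) => [ej|nej2].
  subst j; exists (nth x0 s i.+1); split; [by right|by left|].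
  apply: (gp_adj gp _ _ _ (seg_sym h1) h2); [apply: nth_neq; lia|rewrite nv //; lia|rewrite nv //; lia].
exfalso; apply: (pathA_rung hMA oB he vB _ h1 h2).
case: (ltngtP j i) => hji.
- by apply/orP; left; apply/andP; split; apply: nth_prec; lia.
- by apply/orP; right; apply/andP; split; apply: nth_prec; lia.
- by rewrite hji eqxx in nej.
Qed.

Lemma UB_gen i x y : (i.+1 < n)%N -> x \in B -> y \in B -> Good p (nth x0 s i) (nth x0 s i.+1) x y.
Proof.
move=> hi xB yB z h1 h2; exfalso.
apply: (pathA_B hMA _ _ _ xB yB h1 h2); try apply: nth_A; try lia.
apply: nth_neq; lia.
Qed.

End Side.


Lemma WW_sep (R : realFieldType) (T : finType) (p : T -> (R * R)%type) (u1 u2 v1 v2 : T) z :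
  0 < 1 * det3 (p v1) (p u1) (p u2) -> 0 < -1 * det3 (p u1) (p v1) (p v2) ->
  on_seg (p u1) (p v1) z -> on_seg (p u2) (p v2) z -> False.
Proof.
rewrite mul1r mulN1r oppr_gt0 => h1 h2; apply: seg_sep.
rewrite (det3_cyc (p u1) (p v1) (p u2)) (det3_swap (p v1) (p u1) (p u2)).
by rewrite nmulr_rgt0 // oppr_lt0.
Qed.

Unset Implicit Arguments.
Theorem mainTheorem10 (R : realFieldType) (T : finType) (p : T -> (R * R)%type)
  (n : nat) (c : T -> T -> bool) (L Rt : {set T}) :
  (1 <= n)%N ->
  general_position p ->
  (forall x y, c x y = c y x) ->
  #|L| = (2 * n ^ 2)%N -> #|Rt| = (2 * n ^ 2)%N ->
  mutually_avoiding p L Rt ->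
  (exists col : bool, forall x y, x \in L -> y \in Rt -> c x y = col) ->
  exists (col : bool) (phi : ('I_n + 'I_n)%type -> T),
    mono_noncrossing_copy p (@ladder_adj n) c col phi.
Proof.
move=> n1 gp csym hL hR hMA [col0 hcol].
have hMA' : mutually_avoiding p Rt L by case: hMA => a b c' d; split.
have [r0 r0R] : exists r, r \in Rt.
  have : (0 < #|Rt|)%N by rewrite hR; lia.
  by case/card_gt0P => r; exists r.
have [l0 l0L] : exists l, l \in L.
  have : (0 < #|L|)%N by rewrite hL; lia.
  by case/card_gt0P => l; exists l.
have he1 : pm1 (1 : R) by left.
have he2 : pm1 (-1 : R) by right.
have hL' : (2 * n ^ 2 <= #|L|)%N by rewrite hL.
have hR' : (2 * n ^ 2 <= #|Rt|)%N by rewrite hR.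
case: (ramsey (prec_trans hMA r0R he1) (@prec_irr _ _ p L r0 1)
   (fun x y xL yL xy => prec_tot gp hMA r0R he1 xL yL xy) csym col0 n1 hL')
   => [[su [hsu asu ssu]]|[K [hK uK aK hcK]]]; last first.
  have [phi hphi] := blue_ladder gp hMA n1 hK uK aK hcK; by exists (~~ col0), phi.
case: (ramsey (prec_trans hMA' l0L he2) (@prec_irr _ _ p Rt l0 (-1))
   (fun x y xL yL xy => prec_tot gp hMA' l0L he2 xL yL xy) csym col0 n1 hR')
   => [[sv [hsv asv ssv]]|[K [hK uK aK hcK]]]; last first.
  have [phi hphi] := blue_ladder gp hMA' n1 hK uK aK hcK; by exists (~~ col0), phi.
have ssu' : sorted (prec p L r0 1) su by apply: sub_sorted ssu => x y /andP [].
have ssv' : sorted (prec p Rt l0 (-1)) sv by apply: sub_sorted ssv => x y /andP [].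
exists col0.
have uL : forall i, (i < n)%N -> nth r0 su i \in L by move=> i hi; exact: (nth_A r0 hsu asu hi).
have vR : forall i, (i < n)%N -> nth r0 sv i \in Rt by move=> i hi; exact: (nth_A r0 hsv asv hi).
have UU := UU_gen (x0 := r0) gp hMA r0R he1 hsu ssu' asu.
have VV := UU_gen (x0 := r0) gp hMA' l0L he2 hsv ssv' asv.
have UW := UW_gen (x0 := r0) gp hMA r0R he1 hsu ssu' asu.
have VW := UW_gen (x0 := r0) gp hMA' l0L he2 hsv ssv' asv.
have UB := UB_gen (x0 := r0) hMA r0R he1 hsu ssu' asu.
have VB := UB_gen (x0 := r0) hMA' l0L he2 hsv ssv' asv.
have WW : forall i j, (i < j)%N -> (j < n)%N ->
    Good p (nth r0 su i) (nth r0 sv i) (nth r0 su j) (nth r0 sv j).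
  move=> i j ij hj z h1 h2; exfalso.
  have hi : (i < n)%N by lia.
  apply: (WW_sep _ _ h1 h2).
  - exact: (prec_any hMA r0R he1 (vR i hi) (nth_prec hMA r0R he1 r0 hsu ssu' ij hj)).
  - exact: (prec_any hMA' l0L he2 (uL i hi) (nth_prec hMA' l0L he2 r0 hsv ssv' ij hj)).
pose Eb x y := (exists i, (i.+1 < n)%N /\ x = nth r0 su i /\ y = nth r0 su i.+1) \/
  (exists i, (i.+1 < n)%N /\ x = nth r0 sv i /\ y = nth r0 sv i.+1) \/
  (exists i, (i < n)%N /\ x = nth r0 su i /\ y = nth r0 sv i).
have NEb : NCE p Eb.
  move=> x y x' y' [[i [hi [-> ->]]]|[[i [hi [-> ->]]]|[i [hi [-> ->]]]]]
    [[j [hj [-> ->]]]|[[j [hj [-> ->]]]|[j [hj [-> ->]]]]] ns.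
  - case: (eqVneq i j) => [eij|ij]; first by exfalso; apply: ns; left; rewrite eij.
    exact: UU hi hj ij.
  - exact: UB hi (vR _ (ltnW hj)) (vR _ hj).
  - exact: UW hi hj (vR _ hj).
  - exact: VB hi (uL _ (ltnW hj)) (uL _ hj).
  - case: (eqVneq i j) => [eij|ij]; first by exfalso; apply: ns; left; rewrite eij.
    exact: VV hi hj ij.
  - apply: Good_sym; apply: Good_swap; apply: Good_sym; exact: VW hi hj (uL _ hj).
  - apply: Good_sym; exact: UW hj hi (vR _ hi).
  - apply: Good_sym; apply: Good_sym; apply: Good_swap; apply: Good_sym; exact: VW hj hi (uL _ hi).
  - case: (ltngtP i j) => [ij|ij|eij]; first exact: WW.
    + by apply: Good_sym; apply: WW.
    + by exfalso; apply: ns; left; rewrite eij.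
pose phi (x : ('I_n + 'I_n)%type) := match x with inl i => nth r0 su i | inr i => nth r0 sv i end.
exists phi; apply: (transfer (E := fun x y => Eb x y \/ Eb y x)); last exact: NCE_sym.
- move=> [i|i] [j|j] /= E.
  + congr inl; apply: ord_inj; apply/eqP; apply: contraTT (introT eqP E) => ij.
    exact: (nth_neq hMA r0R he1 r0 hsu ssu' (ltn_ord i) (ltn_ord j) ij).
  + by exfalso; move: (neqAB hMA (uL _ (ltn_ord i)) (vR _ (ltn_ord j))); rewrite E eqxx.
  + by exfalso; move: (neqAB hMA (uL _ (ltn_ord j)) (vR _ (ltn_ord i))); rewrite E eqxx.
  + congr inr; apply: ord_inj; apply/eqP; apply: contraTT (introT eqP E) => ij.
    exact: (nth_neq hMA' l0L he2 r0 hsv ssv' (ltn_ord i) (ltn_ord j) ij).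
- have cu : forall i, (i.+1 < n)%N -> c (nth r0 su i) (nth r0 su i.+1) = col0.
    move=> i hi; move/(sortedP r0): ssu => /(_ i); rewrite hsu => /(_ hi) /andP [_ /eqP] //.
  have cv : forall i, (i.+1 < n)%N -> c (nth r0 sv i) (nth r0 sv i.+1) = col0.
    move=> i hi; move/(sortedP r0): ssv => /(_ i); rewrite hsv => /(_ hi) /andP [_ /eqP] //.
  move=> [i|i] [j|j] /=; have := ltn_ord i; have := ltn_ord j => hj hi.
  + case/orP => /eqP h; [rewrite -h cu //|rewrite -h csym cu //]; lia.
  + move=> /eqP h; rewrite h hcol //; [exact: uL _ hj|exact: vR _ hj].
  + move=> /eqP h; rewrite h csym hcol //; [exact: uL _ hj|exact: vR _ hj].
  + case/orP => /eqP h; [rewrite -h cv //|rewrite -h csym cv //]; lia.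
- move=> [i|i] [j|j] /=; have := ltn_ord i; have := ltn_ord j => hj hi.
  + case/orP => /eqP h.
    * left; left; exists i; split; [lia|by rewrite h].
    * right; left; exists j; split; [lia|by rewrite h].
  + move=> /eqP h; left; right; right; exists i; split => //; by rewrite h.
  + move=> /eqP h; right; right; right; exists j; split => //; by rewrite h.
  + case/orP => /eqP h.
    * left; right; left; exists i; split; [lia|by rewrite h].
    * right; right; left; exists j; split; [lia|by rewrite h].
Qed.
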